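(* Let $G$ be a finite subgroup of the unit circle $S^1=\{z\in\mathbb{C}: |z|=1\}$ (under multiplication). (1) Let $\lambda\in G$. Then there do not exist sets $A,B\subseteq\mathbb{C}^*$ with $|A|\ge 2$ and $|B|\ge 2$ such that $AB=(G-\lambda)\setminus\{0\}$. (2) If $|G|\ge 3$, then for every $\xi,\mu\in\mathbb{C}^*$ and every $A\subseteq\mathbb{C}^*$, we have $A/A\neq(\xi G+\mu)\setminus\{0\}$. (3) If $|G|\ge 3$, then for every $\xi,\mu\in\mathbb{C}^*$ and every $A\subseteq\mathbb{C}^*$, we have $A/A\neq\big((\xi G\cup\{0\})+\mu\big)\setminus\{0\}$.
   Context: $\mathbb{C}^*=\mathbb{C}\setminus\{0\}$. For sets $A,B\subseteq\mathbb{C}^*$: $AB=\{ab: a\in A, b\in B\}$ and $A/A=\{a/b: a,b\in A\}$. For $S\subseteq\mathbb{C}$: $\xi S=\{\xi s: s\in S\}$, $S+\mu=\{s+\mu:s\in S\}$, $S-\lambda=\{s-\lambda: s\in S\}$. *)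

(* Defs.v *)
From HB Require Import structures.
From mathcomp Require Import all_boot all_order all_algebra.
From mathcomp Require Import finmap.
From mathcomp Require Import complex.
From mathcomp Require Import boolp classical_sets reals.
Set Implicit Arguments. Unset Strict Implicit. Unset Printing Implicit Defensive.
Import Order.TTheory GRing.Theory Num.Theory.
Local Open Scope ring_scope.
Local Open Scope classical_set_scope.

Definition Cstar (R : realType) : set R[i] := [set z | z != 0].

Definition unit_circle_subgroup (R : realType) (G : {fset R[i]}) : Prop :=
  [/\ (1 \in G)%fset,
      (forall x y, (x \in G)%fset -> (y \in G)%fset -> (x * y \in G)%fset),
      (forall x, (x \in G)%fset -> (x^-1 \in G)%fset) &
      (forall x, (x \in G)%fset -> `|x| = 1)].

Definition setprod (R : realType) (A B : set R[i]) : set R[i] :=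
  [set z | exists a b, A a /\ B b /\ z = a * b].

Definition setquot (R : realType) (A : set R[i]) : set R[i] :=
  [set z | exists a b, A a /\ A b /\ z = a / b].

Definition atleast2 (T : Type) (A : set T) : Prop :=
  exists a1 a2, A a1 /\ A a2 /\ a1 <> a2.

Definition fset_as_set (R : realType) (G : {fset R[i]}) : set R[i] :=
  [set x | (x \in G)%fset].

Definition scaleset (R : realType) (xi : R[i]) (S : set R[i]) : set R[i] :=
  [set z | exists s, S s /\ z = xi * s].

Definition shiftset (R : realType) (S : set R[i]) (mu : R[i]) : set R[i] :=
  [set z | exists s, S s /\ z = s + mu].

(* Main.v *)
Require Import Defs.
From HB Require Import structures.
From mathcomp Require Import all_boot all_order all_algebra.
From mathcomp Require Import finmap.
From mathcomp Require Import complex.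
From mathcomp Require Import boolp classical_sets reals.
From mathcomp Require Import ring.
Import Order.TTheory GRing.Theory Num.Theory.
Local Open Scope ring_scope.
Local Open Scope classical_set_scope.



Lemma lemK (F : fieldType) (p1 p2 P1 P2 q1 q2 Q1 Q2 : F) : p1 != p2 -> q1 != q2 ->
  p1*q1+P1*Q1 = -1 -> p1*q2+P1*Q2 = -1 -> p2*q1+P2*Q1 = -1 -> p2*q2+P2*Q2 = -1 -> False.
Proof.
move=> np nq e11 e12 e21 e22.
set h := p1*(P1-P2) - P1*(p1-p2).
have Hh: h*(q1-q2) = (P1-P2)*((p1*q1+P1*Q1) - (p1*q2+P1*Q2)) - P1*((p1*q1+P1*Q1) - (p1*q2+P1*Q2) - (p2*q1+P2*Q1) + (p2*q2+P2*Q2)) by rewrite /h; ring.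
rewrite e11 e12 e21 e22 in Hh.
have : h * (q1 - q2) = 0 by rewrite Hh; ring.
move/eqP; rewrite mulf_eq0 (subr_eq0 q1) (negbTE nq) orbF => /eqP h0.
have Hd: (p1 - p2) = (p1-p2)*(p1*q1+P1*Q1+1) - p1*((p1*q1+P1*Q1) - (p2*q1+P2*Q1)) + h*Q1 by rewrite /h; ring.
rewrite e11 e21 h0 in Hd.
have : p1 - p2 = 0 by rewrite Hd; ring.
by move/eqP; rewrite subr_eq0 (negbTE np).
Qed.

Lemma lemL (R : realType) (a b l : R[i]) : a != 0 -> b != 0 -> l * l^* = 1 ->
  (a*b + l) * (a*b+l)^* = 1 -> a^-1 * (l / b) + (a^-1)^* * (l / b)^* = -1.
Proof.
move=> a0 b0 hl hg.
have ca0 : a^* != 0 by rewrite conjC_eq0.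
have cb0 : b^* != 0 by rewrite conjC_eq0.
rewrite rmorphD rmorphM in hg.
rewrite fmorphV rmorphM fmorphV.
have e: a^-1 * (l * b^-1) + a^*^-1 * (l^* * b^*^-1) =
   (l*(a^* * b^*) + l^* * (a*b)) / ((a*b)*(a^* * b^*)).
  move: ca0 cb0; set A' := a^*; set B' := b^*; set L' := l^* => ca0 cb0.
  by field; rewrite ?a0 ?b0 ?ca0 ?cb0.
rewrite e.
have -> : l*(a^* * b^*) + l^* * (a*b) = -((a*b)*(a^* * b^*)).
  apply/eqP; rewrite -subr_eq0.
  have -> : l * (a^* * b^*) + l^* * (a * b) - - (a * b * (a^* * b^*)) =
     (a*b+l)*(a^* * b^*+l^*) - l * (l^*) by ring.
  by rewrite hg hl subrr.
by rewrite mulNr divff // !mulf_neq0.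
Qed.

Lemma part1 (R : realType) (G : {fset R[i]}) :
  unit_circle_subgroup G ->
  (forall lambda : R[i], (lambda \in G)%fset ->
     ~ exists A B : set R[i],
         [/\ A `<=` @Cstar R, B `<=` @Cstar R, atleast2 A, atleast2 B &
             setprod A B = shiftset (fset_as_set G) (- lambda) `\` [set 0]]).
Proof.
move=> [G1 GM GV Gn] l lG [A [B [AC BC [a1 [a2 [Aa1 [Aa2 na]]]] [b1 [b2 [Bb1 [Bb2 nb]]]] E]]].
have Gc : forall g, (g \in G)%fset -> g * g^* = 1.
  by move=> g gG; rewrite -normCK Gn // expr1n.
have l0 : l != 0.
  by apply/eqP => l0; have := Gn _ lG; rewrite l0 normr0 => /eqP; rewrite eq_sym oner_eq0.
have key : forall a b, A a -> B b -> a^-1*(l/b) + (a^-1)^* * (l/b)^* = -1.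
  move=> a b Aa Bb.
  have : setprod A B (a*b) by exists a, b.
  rewrite E => -[[s [sG hs]] nz].
  have hs' : a*b + l = s by rewrite hs addrNK.
  apply: lemL; [exact: AC | exact: BC | exact: Gc | by rewrite hs'; exact: Gc].
apply: (@lemK _ a1^-1 a2^-1 (a1^-1)^* (a2^-1)^* (l/b1) (l/b2) (l/b1)^* (l/b2)^*).
- by rewrite (inj_eq invr_inj); apply/eqP.
- by rewrite (inj_eq (mulfI l0)) (inj_eq invr_inj); apply/eqP.
all: exact: key.
Qed.




Lemma perm_self (T : eqType) (f : T -> T) (s : seq T) : uniq s ->
  {in s &, injective f} -> {in s, forall x, f x \in s} -> perm_eq s (map f s).
Proof.
move=> us fi fs.
have um : uniq (map f s) by rewrite map_inj_in_uniq.
apply: uniq_perm => //.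
have sub : {subset map f s <= s} by move=> y /mapP [x xs ->]; exact: fs.
have sz : (size s <= size (map f s))%N by rewrite size_map.
have [_ H] := uniq_min_size um sub sz.
by move=> x; rewrite H.
Qed.

Lemma sum_inv (K : fieldType) (s : seq K) : uniq s -> 0 \notin s ->
  {in s, forall x, x^-1 \in s} ->
  (\sum_(x <- s | x != 1) (x - 1)^-1) *+ 2 = - \sum_(x <- s | x != 1) 1.
Proof.
move=> us s0 si.
have P := @perm_self _ _ s us (in2W (@invr_inj K)) si.
rewrite mulr2n {1}(perm_big _ P) big_map /=.
rewrite (eq_bigl (fun x => x != 1)); last by move=> x; rewrite invr_eq1.
rewrite -big_split /= -sumrN big_seq_cond [RHS]big_seq_cond.
apply: eq_bigr => x /andP [xs x1].
have x0 : x != 0 by apply: contraNneq s0 => <-.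
have x1' : x - 1 != 0 by rewrite subr_eq0.
have x1'' : 1 - x != 0 by rewrite subr_eq0 eq_sym.
have key : forall y : K, y != 0 -> 1 - y != 0 -> y - 1 != 0 ->
  (y^-1 - 1)^-1 + (y - 1)^-1 = -1.
  move=> y h1 h2 h3; have h4 : 1 + -1 * y != 0 by rewrite mulN1r.
  by field; rewrite h1 h3 h4.
exact: key.
Qed.

Lemma eq_bigl_seq (V : nmodType) (T : eqType) (s : seq T) (P Q : pred T) (F : T -> V) :
  {in s, P =1 Q} -> \sum_(i <- s | P i) F i = \sum_(i <- s | Q i) F i.
Proof.
move=> H; rewrite big_seq_cond [RHS]big_seq_cond; apply: eq_bigl => x.
by case xs: (x \in s) => //=; rewrite H.
Qed.

Lemma sum_split (V : nmodType) (T : eqType) (s : seq T) (j : T) (P : pred T) (F : T -> V) :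
  uniq s -> j \in s -> P j ->
  \sum_(i <- s | P i) F i = F j + \sum_(i <- s | P i && (i != j)) F i.
Proof.
move=> us js Pj.
by rewrite -big_filter (bigD1_seq j) ?mem_filter ?Pj ?filter_uniq //= big_filter_cond.
Qed.

Lemma sum_one (V : pzSemiRingType) (T : Type) (s : seq T) :
  \sum_(i <- s) (1 : V) = (size s)%:R.
Proof. by rewrite -sum1_size natr_sum. Qed.



Lemma G_nz {R : realType} {G : {fset R[i]}} {g} :
  unit_circle_subgroup G -> (g \in G)%fset -> g != 0.
Proof.
move=> [_ _ _ Gn] gG; apply/eqP => g0.
by have := Gn _ gG; rewrite g0 normr0 => /eqP; rewrite eq_sym oner_eq0.
Qed.

Lemma G_conj {R : realType} {G : {fset R[i]}} {g} :
  unit_circle_subgroup G -> (g \in G)%fset -> g * g^* = 1.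
Proof. by move=> [_ _ _ Gn] gG; rewrite -normCK Gn // expr1n. Qed.

Lemma div_eq1 (K : fieldType) (g g0 : K) : g0 != 0 -> (g / g0 == 1) = (g == g0).
Proof. by move=> g00; rewrite -(inj_eq (mulIf g00)) mulfVK // mul1r. Qed.

Lemma sum_G (R : realType) (G : {fset R[i]}) g0 :
  unit_circle_subgroup G -> (g0 \in G)%fset ->
  (\sum_(g <- G | g / g0 != 1) (g / g0 - 1)^-1) *+ 2 = - \sum_(g <- G | g / g0 != 1) 1.
Proof.
move=> hG g0G; have [G1 GM GV Gn] := hG.
have g00 := G_nz hG g0G.
set s := [seq g / g0 | g <- G].
have u : uniq s.
  have inj : injective (fun g => g / g0) by move=> a b; apply: mulIf; rewrite invr_eq0.
  by rewrite map_inj_uniq ?fset_uniq.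
have n0 : 0 \notin s.
  apply/negP => /mapP [g gG /eqP]; rewrite eq_sym mulf_eq0 invr_eq0 (negbTE g00) orbF.
  by apply/negP; exact: G_nz hG gG.
have c : {in s, forall x, x^-1 \in s}.
  move=> y ys; case/mapP: ys => g gG ey; rewrite ey; apply/mapP; exists (g0 * g0 * g^-1).
    by apply: (GM); [apply: (GM) | apply: (GV)].
  have gn := G_nz hG gG.
  by field; rewrite gn g00.
by have := @sum_inv _ s u n0 c; rewrite !big_map.
Qed.

Lemma NG_val (R : realType) (G : {fset R[i]}) g0 :
  unit_circle_subgroup G -> (g0 \in G)%fset ->
  \sum_(g <- G | g / g0 != 1) (1 : R[i]) = (size G)%:R - 1.
Proof.
move=> hG g0G; have g00 := G_nz hG g0G.
rewrite -sum_one [in RHS](bigD1_seq g0) ?fset_uniq //= addrC addrK.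
by apply: eq_bigl => g; rewrite div_eq1.
Qed.

Lemma sum_Ginv (R : realType) (G : {fset R[i]}) h :
  unit_circle_subgroup G -> (h \in G)%fset -> h != 1 ->
  \sum_(g <- G) g^-1 = 0.
Proof.
move=> hG hG' h1; have [G1 GM GV Gn] := hG.
have h0 := G_nz hG hG'.
have P := @perm_self _ (fun g => h * g) G (fset_uniq G) (in2W (mulfI h0)) (fun g gG => GM _ _ hG' gG).
have : \sum_(g <- G) g^-1 = \sum_(g <- [seq h * g | g <- G]) g^-1 := perm_big _ P.
rewrite big_map.
under [X in _ = X]eq_bigr => g _ do rewrite invfM.
rewrite -mulr_sumr => /eqP; rewrite -subr_eq0 -{1}[X in X - _]mul1r -mulrBl mulf_eq0.
rewrite subr_eq0 eq_sym invr_eq1 (negbTE h1) /=.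
by move/eqP.
Qed.



Lemma two_elems (R : realType) (G : {fset R[i]}) : (2 <= #|` G|)%N ->
  exists g1 g2, [/\ (g1 \in G)%fset, (g2 \in G)%fset & g1 != g2].
Proof.
move=> k2; exists (nth 0 G 0), (nth 0 G 1); split.
- by apply: mem_nth; apply: leq_trans k2.
- by apply: mem_nth.
- by rewrite nth_uniq ?fset_uniq //; apply: leq_trans k2.
Qed.

Lemma N_form (R : realType) (G : {fset R[i]}) : (3 <= #|` G|)%N ->
  exists m, (size G)%:R - 1 = (m.+2)%:R :> R[i].
Proof.
move=> k3; exists (#|` G| - 3)%N.
by rewrite -{1}(subnK k3) addn3 mulrSr addrK.
Qed.

Lemma conj_nat (R : realType) m : ((m%:R : R[i])^*) = m%:R.
Proof. by rewrite rmorph_nat. Qed.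

Lemma N_sq (R : realType) m : ((m.+2)%:R : R[i]) * (m.+2)%:R != 1.
Proof. by rewrite -natrM pnatr_eq1 muln_eq1 andbb. Qed.

Lemma part2 (R : realType) (G : {fset R[i]}) :
  unit_circle_subgroup G ->
  ((3 <= #|` G|)%N ->
     forall (xi mu : R[i]), xi != 0 -> mu != 0 ->
     forall A : set R[i], A `<=` @Cstar R ->
       setquot A <> shiftset (scaleset xi (fset_as_set G)) mu `\` [set 0]).
Proof.
move=> hG k3 xi mu xi0 mu0 A AC E.
have [G1 GM GV Gn] := hG.
pose z g := xi * g + mu.
have zinj : injective z by move=> a b /addIr /(mulfI xi0).
have memE x : setquot A x <->
   ((exists s, (exists g, (g \in G)%fset /\ s = xi * g) /\ x = s + mu) /\ x <> 0).
  by rewrite E; split.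
pose U := [seq z g | g <- G & z g != 0].
have memU x : x \in U <-> setquot A x.
  rewrite memE; split.
  - case/mapP => g; rewrite mem_filter => /andP [nz gG] ->; split; last exact/eqP.
    by exists (xi * g); split => //; exists g.
  - move=> [[s [[g [gG ->]] ->]] nz]; apply/mapP; exists g => //.
    by rewrite mem_filter gG andbT; exact/eqP.
have invU x : x \in U -> x^-1 \in U.
  move/memU => [a [b [Aa [Ab ->]]]]; apply/memU; exists b, a; do 2 split => //.
  by rewrite invf_div.
have U0 : 0 \notin U by apply/negP => /memU/memE [_]; apply.
have Uu : uniq U by rewrite map_inj_uniq ?filter_uniq ?fset_uniq.
have [g1 [g2 [g1G g2G g12]]] := @two_elems _ G (ltnW k3).
have oneU : 1 \in U.
  have [x xU] : exists x, x \in U.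
    case: (eqVneq (z g1) 0) => h1.
    - exists (z g2); apply/mapP; exists g2 => //; rewrite mem_filter g2G andbT.
      by rewrite -h1 (inj_eq zinj) eq_sym.
    - by exists (z g1); apply/mapP; exists g1 => //; rewrite mem_filter g1G andbT.
  move/memU: xU => [a [b [Aa [Ab _]]]]; apply/memU; exists a, a; do 2 split => //.
  by rewrite divff //; exact: AC.
have [g0 g0G z0] : exists2 g0, (g0 \in G)%fset & z g0 = 1.
  by move/memU: oneU => /memE [[s [[g [gG ->]] e]] _]; exists g => //; rewrite /z; symmetry.
pose nu := xi * g0.
have g00 := G_nz hG g0G.
have nu0 : nu != 0 by rewrite mulf_neq0.
have mue : mu = 1 - nu by rewrite -z0 /z /nu; ring.
have Zeq1 g : (z g != 1) = (g / g0 != 1) by rewrite div_eq1 // -z0 (inj_eq zinj).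
have Zm1 g : z g - 1 = nu * (g / g0 - 1) by rewrite /z mue /nu; field.
set SG := \sum_(g <- G | g / g0 != 1) (g / g0 - 1)^-1.
set NG := \sum_(g <- G | g / g0 != 1) (1 : R[i]).
have hSG : SG *+ 2 = - NG := @sum_G _ G g0 hG g0G.
have [m hNG] := @N_form _ G k3.
have {}hNG : NG = (m.+2)%:R by rewrite /NG (@NG_val _ G g0 hG g0G).
have NG0 : NG != 0 by rewrite hNG pnatr_eq0.
have T1 : \sum_(g <- G | z g != 1) (z g - 1)^-1 = nu^-1 * SG.
  rewrite mulr_sumr; apply: eq_big => g; first by rewrite Zeq1.
  by move=> _; rewrite Zm1 invfM.
have T2 : \sum_(g <- G | z g != 1) (1 : R[i]) = NG by apply: eq_bigl => g; rewrite Zeq1.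
have SU := @sum_inv _ U Uu U0 invU.
rewrite /U !big_map !big_filter_cond in SU.
case: (boolP (has (fun g => z g == 0) G)) => [/hasP [g1' g1G' /eqP zg1] | /hasPn nz].
-
  rewrite (@eq_bigl_seq _ _ _ _ (fun g => (z g != 1) && (g != g1'))) in SU;
    last by move=> g gG; rewrite -zg1 (inj_eq zinj) andbC.
  rewrite (@eq_bigl_seq _ _ _ _ (fun g => (z g != 1) && (g != g1')) (fun _ => 1)) in SU;
    last by move=> g gG; rewrite -zg1 (inj_eq zinj) andbC.
  have Pg1 : z g1' != 1 by rewrite zg1 eq_sym oner_eq0.
  have S1 := @sum_split _ _ G g1' (fun g => z g != 1) (fun g => (z g - 1)^-1) (fset_uniq G) g1G' Pg1.
  have S2 := @sum_split _ _ G g1' (fun g => z g != 1) (fun _ => (1 : R[i])) (fset_uniq G) g1G' Pg1.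
  rewrite T1 zg1 sub0r invrN invr1 in S1.
  rewrite T2 in S2.
  rewrite /= in S1 S2.
  set X := \sum_(i <- G | (z i != 1) && (i != g1')) (z i - 1)^-1 in S1 SU.
  set Y := \sum_(i <- G | (z i != 1) && (i != g1')) (1 : R[i]) in S2 SU.
  have eX : X = nu^-1 * SG + 1 by rewrite S1; ring.
  have eY : Y = NG - 1 by rewrite S2; ring.
  rewrite eX eY mulrnDl -mulrnAr hSG in SU.
  have e1 : nu^-1 * NG = NG + 1.
    apply/eqP; rewrite -subr_eq0.
    have -> : nu^-1 * NG - (NG + 1) = -(nu^-1 * - NG + 1 *+ 2 - - (NG - 1)) by ring.
    by rewrite SU subrr oppr0.
  pose a1 := g1' / g0.
  have h : nu * a1 + (1 - nu) = 0 by rewrite -zg1 /z mue /a1 /nu; field.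
  have ea1 : a1 = 1 - nu^-1.
    have -> : a1 = ((nu * a1 + (1 - nu)) - (1 - nu)) / nu by field.
    by rewrite h; field.
  have nui : nu^-1 = (NG + 1) / NG by rewrite -e1 mulfK.
  have ea2 : a1 = - NG^-1 by rewrite ea1 nui; field.
  have ca : a1 * a1^* = 1.
    rewrite /a1 rmorphM fmorphV mulrACA -invfM (G_conj hG g1G') (G_conj hG g0G).
    by rewrite invr1 mulr1.
  rewrite ea2 hNG rmorphN fmorphV rmorph_nat mulrNN -invfM in ca.
  by move/eqP: ca; rewrite invr_eq1 (negbTE (N_sq R m)).
- rewrite (@eq_bigl_seq _ _ _ _ (fun g => z g != 1)) in SU; last by move=> g gG; rewrite nz.
  rewrite (@eq_bigl_seq _ _ _ _ (fun g => z g != 1) (fun _ => 1)) in SU; last by move=> g gG; rewrite nz.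
  rewrite T1 T2 -mulrnAr hSG in SU.
  have : nu^-1 * NG = NG by apply: oppr_inj; rewrite -mulrN SU.
  move/eqP; rewrite -subr_eq0 -{2}[NG]mul1r -mulrBl mulf_eq0 (negbTE NG0) orbF.
  rewrite subr_eq0 invr_eq1 => /eqP nu1.
  by move: mu0; rewrite mue nu1 subrr eqxx.
Qed.



Lemma part3 (R : realType) (G : {fset R[i]}) :
  unit_circle_subgroup G ->
  ((3 <= #|` G|)%N ->
     forall (xi mu : R[i]), xi != 0 -> mu != 0 ->
     forall A : set R[i], A `<=` @Cstar R ->
       setquot A <>
         shiftset (scaleset xi (fset_as_set G) `|` [set 0]) mu `\` [set 0]).
Proof.
move=> hG k3 xi mu xi0 mu0 A AC E.
have [G1 GM GV Gn] := hG.
pose z g := xi * g + mu.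
have zinj : injective z by move=> a b /addIr /(mulfI xi0).
have memE x : setquot A x <->
   ((exists s, ((exists g, (g \in G)%fset /\ s = xi * g) \/ s = 0) /\ x = s + mu) /\ x <> 0).
  by rewrite E; split.
pose U := mu :: [seq z g | g <- G & z g != 0].
have memU x : x \in U <-> setquot A x.
  rewrite memE inE; split.
  - case/orP => [/eqP -> | ].
      split; last exact/eqP.
      by exists 0; split; [right | rewrite add0r].
    case/mapP => g; rewrite mem_filter => /andP [nz gG] ->; split; last exact/eqP.
    by exists (xi * g); split => //; left; exists g.
  - move=> [[s [[[g [gG ->]] | ->] ->]] nz].
      apply/orP; right; apply/mapP; exists g => //.
      by rewrite mem_filter gG andbT; exact/eqP.
    by rewrite add0r eqxx.
have invU x : x \in U -> x^-1 \in U.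
  move/memU => [a [b [Aa [Ab ->]]]]; apply/memU; exists b, a; do 2 split => //.
  by rewrite invf_div.
have U0 : 0 \notin U by apply/negP => /memU/memE [_]; apply.
have Uu : uniq U.
  rewrite cons_uniq map_inj_uniq ?filter_uniq ?fset_uniq // andbT.
  apply/negP => /mapP [g]; rewrite mem_filter => /andP [_ gG] e.
  move/eqP: e; rewrite eq_sym -subr_eq0 /z addrK mulf_eq0 (negbTE xi0) /=.
  by apply/negP; exact: G_nz hG gG.
have [g1 [g2 [g1G g2G g12]]] := @two_elems _ G (ltnW k3).
have oneU : 1 \in U.
  move/memU: (mem_head mu [seq z g | g <- G & z g != 0]) => [a [b [Aa [Ab _]]]].
  apply/memU; exists a, a; do 2 split => //.
  by rewrite divff //; exact: AC.
have SU := @sum_inv _ U Uu U0 invU.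
rewrite /U !big_cons !big_map !big_filter_cond in SU.
have [k hk] := @N_form _ G k3.
case: (eqVneq mu 1) => [mu1 | mu1].
-
  rewrite mu1 eqxx /= in SU.
  have zn1 g : (g \in G)%fset -> z g != 1.
    move=> gG; rewrite /z mu1 -subr_eq0 addrK mulf_eq0 (negbTE xi0) /=.
    exact: G_nz hG gG.
  have zm1 g : z g - 1 = xi * g by rewrite /z mu1 addrK.
  have [h hG' h1] : exists2 h, (h \in G)%fset & h != 1.
    case: (eqVneq g1 1) => e; last by exists g1.
    by exists g2 => //; rewrite -e eq_sym.
  have Si := @sum_Ginv _ G h hG hG' h1.
  have Sall : \sum_(g <- G) (z g - 1)^-1 = 0.
    under eq_bigr => g _ do rewrite zm1 invfM.
    by rewrite -mulr_sumr Si mulr0.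
  have Nall : \sum_(g <- G) (1 : R[i]) = (k.+2)%:R + 1 by rewrite sum_one -hk subrK.
  case: (boolP (has (fun g => z g == 0) G)) => [/hasP [g1' g1G' /eqP zg1] | /hasPn nz].
  + rewrite (@eq_bigl_seq _ _ _ _ (fun g => g != g1')) in SU;
      last by move=> g gG; rewrite zn1 // andbT -zg1 (inj_eq zinj).
    rewrite (@eq_bigl_seq _ _ _ _ (fun g => g != g1') (fun _ => 1)) in SU;
      last by move=> g gG; rewrite zn1 // andbT -zg1 (inj_eq zinj).
    have S1 : \sum_(g <- G) (z g - 1)^-1 = (z g1' - 1)^-1 + \sum_(g <- G | g != g1') (z g - 1)^-1.
      by rewrite (bigD1_seq g1') ?fset_uniq.
    have S2 : \sum_(g <- G) (1 : R[i]) = 1 + \sum_(g <- G | g != g1') (1 : R[i]).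
      by rewrite (bigD1_seq g1') ?fset_uniq.
    rewrite Sall zg1 sub0r invrN invr1 /= in S1.
    rewrite Nall /= in S2.
    set X := \sum_(i <- G | i != g1') (z i - 1)^-1 in S1 SU.
    set Y := \sum_(i <- G | i != g1') (1 : R[i]) in S2 SU.
    have eX : X = 1 by apply: (addrI (-1)); rewrite -S1 addNr.
    have eY : Y = (k.+2)%:R by apply: (addIr 1); rewrite S2 addrC.
    rewrite eX eY in SU.
    have : ((k.+4)%:R : R[i]) = 0.
      by rewrite -addn2 natrD SU subrr.
    by move/eqP; rewrite pnatr_eq0.
  + rewrite (@eq_bigl_seq _ _ _ _ xpredT) in SU; last by move=> g gG; rewrite nz //=; apply: zn1.
    rewrite (@eq_bigl_seq _ _ _ _ xpredT (fun _ => 1)) in SU; last by move=> g gG; rewrite nz //=; apply: zn1.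
    rewrite Sall Nall mul0rn in SU.
    have : ((k.+3)%:R : R[i]) = 0 by rewrite -addn1 natrD; apply: oppr_inj; rewrite -SU oppr0.
    by move/eqP; rewrite pnatr_eq0.
-
  rewrite mu1 /= in SU.
  have [g0 g0G z0] : exists2 g0, (g0 \in G)%fset & z g0 = 1.
    move: oneU; rewrite inE eq_sym (negbTE mu1) /= => /mapP [g].
    by rewrite mem_filter => /andP [_ gG] e; exists g => //; rewrite e.
  pose nu := xi * g0.
  have g00 := G_nz hG g0G.
  have nu0 : nu != 0 by rewrite mulf_neq0.
  have mue : mu = 1 - nu by rewrite -z0 /z /nu; ring.
  have Zeq1 g : (z g != 1) = (g / g0 != 1) by rewrite div_eq1 // -z0 (inj_eq zinj).
  have Zm1 g : z g - 1 = nu * (g / g0 - 1) by rewrite /z mue /nu; field.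
  set SG := \sum_(g <- G | g / g0 != 1) (g / g0 - 1)^-1.
  set NG := \sum_(g <- G | g / g0 != 1) (1 : R[i]).
  have hSG : SG *+ 2 = - NG := @sum_G _ G g0 hG g0G.
  have [m hNG] := @N_form _ G k3.
  have {}hNG : NG = (m.+2)%:R by rewrite /NG (@NG_val _ G g0 hG g0G).
  have hN1 : NG + 1 = (m.+3)%:R by rewrite hNG [RHS]mulrSr.
  have hN2 : NG + 2 = (m.+4)%:R by rewrite hNG -natrD addn2.
  have N10 : NG + 1 != 0 by rewrite hN1 pnatr_eq0.
  have N20 : NG + 2 != 0 by rewrite hN2 pnatr_eq0.
  have T1 : \sum_(g <- G | z g != 1) (z g - 1)^-1 = nu^-1 * SG.
    rewrite mulr_sumr; apply: eq_big => g; first by rewrite Zeq1.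
    by move=> _; rewrite Zm1 invfM.
  have T2 : \sum_(g <- G | z g != 1) (1 : R[i]) = NG by apply: eq_bigl => g; rewrite Zeq1.
  have Fmu : (mu - 1)^-1 = - nu^-1 by rewrite mue addrAC subrr add0r invrN.
  rewrite Fmu in SU.
  case: (boolP (has (fun g => z g == 0) G)) => [/hasP [g1' g1G' /eqP zg1] | /hasPn nz].
  + rewrite (@eq_bigl_seq _ _ _ _ (fun g => (z g != 1) && (g != g1'))) in SU;
      last by move=> g gG; rewrite -zg1 (inj_eq zinj) andbC.
    rewrite (@eq_bigl_seq _ _ _ _ (fun g => (z g != 1) && (g != g1')) (fun _ => 1)) in SU;
      last by move=> g gG; rewrite -zg1 (inj_eq zinj) andbC.
    have Pg1 : z g1' != 1 by rewrite zg1 eq_sym oner_eq0.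
    have S1 := @sum_split _ _ G g1' (fun g => z g != 1) (fun g => (z g - 1)^-1) (fset_uniq G) g1G' Pg1.
    have S2 := @sum_split _ _ G g1' (fun g => z g != 1) (fun _ => (1 : R[i])) (fset_uniq G) g1G' Pg1.
    rewrite T1 zg1 sub0r invrN invr1 in S1.
    rewrite T2 in S2.
    rewrite /= in S1 S2.
    set X := \sum_(i <- G | (z i != 1) && (i != g1')) (z i - 1)^-1 in S1 SU.
    set Y := \sum_(i <- G | (z i != 1) && (i != g1')) (1 : R[i]) in S2 SU.
    have eX : X = nu^-1 * SG + 1 by rewrite S1; ring.
    have eY : Y = NG - 1 by rewrite S2; ring.
    rewrite eX eY in SU.
    have e1 : nu^-1 * (NG + 2) = NG + 2.
      apply/eqP; rewrite -subr_eq0; apply/eqP.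
      have -> : nu^-1 * (NG + 2) - (NG + 2) = -((- nu^-1 + (nu^-1 * SG + 1)) *+ 2 - - (1 + (NG - 1)))
            + nu^-1 * (SG *+ 2 + NG) by ring.
      by rewrite SU hSG; ring.
    move/eqP: e1; rewrite -subr_eq0 -{2}[NG + 2]mul1r -mulrBl mulf_eq0 (negbTE N20) orbF.
    rewrite subr_eq0 invr_eq1 => /eqP nu1.
    by move: mu0; rewrite mue nu1 subrr eqxx.
  + rewrite (@eq_bigl_seq _ _ _ _ (fun g => z g != 1)) in SU; last by move=> g gG; rewrite nz.
    rewrite (@eq_bigl_seq _ _ _ _ (fun g => z g != 1) (fun _ => 1)) in SU; last by move=> g gG; rewrite nz.
    rewrite T1 T2 in SU.
    have e1 : nu^-1 * (NG + 2) = NG + 1.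
      apply/eqP; rewrite -subr_eq0; apply/eqP.
      have -> : nu^-1 * (NG + 2) - (NG + 1) = -((- nu^-1 + nu^-1 * SG) *+ 2 - - (1 + NG))
            + nu^-1 * (SG *+ 2 + NG) by ring.
      by rewrite SU hSG; ring.
    have nui : nu^-1 = (NG + 1) / (NG + 2) by rewrite -e1 mulfK.
    have nue : nu = (NG + 2) / (NG + 1) by rewrite -[nu]invrK nui invf_div.
    have mue' : mu = - (NG + 1)^-1 by rewrite mue nue; field.
    have := invU mu (mem_head _ _); rewrite inE => /orP [/eqP e | ].
    * have mm : mu * mu = 1 by rewrite -{1}e mulVf.
      rewrite mue' mulrNN -invfM in mm.
      by move/eqP: mm; rewrite invr_eq1 hN1 (negbTE (N_sq R m.+1)).
    * case/mapP => g; rewrite mem_filter => /andP [_ gG] e.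
      pose a := g / g0.
      have h : nu * a + mu = mu^-1 by rewrite e /z /a /nu; field.
      have ea : a = - NG.
        have -> : a = ((nu * a + mu) - mu) / nu by field.
        by rewrite h mue' nue; field; rewrite N10 N20.
      have ca : a * a^* = 1.
        rewrite /a rmorphM fmorphV mulrACA -invfM (G_conj hG gG) (G_conj hG g0G).
        by rewrite invr1 mulr1.
      rewrite ea hNG rmorphN rmorph_nat mulrNN in ca.
      by move/eqP: ca; rewrite (negbTE (N_sq R m)).
Qed.

Theorem theorem1p12 (R : realType) (G : {fset R[i]}) :
  unit_circle_subgroup G ->
  (* (1) *)
  (forall lambda : R[i], (lambda \in G)%fset ->
     ~ exists A B : set R[i],
         [/\ A `<=` @Cstar R, B `<=` @Cstar R, atleast2 A, atleast2 B &
             setprod A B = shiftset (fset_as_set G) (- lambda) `\` [set 0]]) /\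
  (* (2) *)
  ((3 <= #|` G|)%N ->
     forall (xi mu : R[i]), xi != 0 -> mu != 0 ->
     forall A : set R[i], A `<=` @Cstar R ->
       setquot A <> shiftset (scaleset xi (fset_as_set G)) mu `\` [set 0]) /\
  (* (3) *)
  ((3 <= #|` G|)%N ->
     forall (xi mu : R[i]), xi != 0 -> mu != 0 ->
     forall A : set R[i], A `<=` @Cstar R ->
       setquot A <>
         shiftset (scaleset xi (fset_as_set G) `|` [set 0]) mu `\` [set 0]).
Proof.
move=> hG; split; first exact: (@part1 R G hG).
by split; [exact: (@part2 R G hG) | exact: (@part3 R G hG)].
Qed.
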